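(* In the setting of the context, let $(l_u,\delta,l_0)\in\widetilde{\mathrm{CC}}(\tilde X)$, choose an isomorphism $\iota:\mathbb{C}((\tilde z))[[\lambda]]\xrightarrow{\sim}l_u$ whose reduction mod $\lambda$ maps $\mathbb{C}[[\tilde z]]$ onto $l_0$, and let $a(\tilde z,\lambda)=\sum_i a_i(\tilde z)\lambda^i\in\mathbb{C}((\tilde z))[[\lambda]]$ be defined by $(\lambda\frac{d}{d\tilde z}+a)d\tilde z=\iota^{-1}\delta\iota$. Then the essential fiber of the functor $\widetilde{\mathrm{Conn}}(\tilde X)\to\widetilde{\mathrm{CC}}(\tilde X)$ over $(l_u,\delta,l_0)$ is either empty or equivalent to a one-point set, and it is non-empty if and only if $a_1(\tilde z)\in\tilde z^{-1}\mathbb{C}[[\tilde z]]$ and $\operatorname{res}_{\tilde z=0}a(\tilde z,\lambda)=-\lambda/2$.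
   Context: Let $t,d\in\mathbb{C}[[z]]$ with $t^2-4d$ having a simple zero at $0$; $\tilde X=\operatorname{Spf}\mathbb{C}[[\tilde z]]$ is the spectral curve $\xi^2-t\xi+d=0$ over $\operatorname{Spf}\mathbb{C}[[z]]$, $\tilde z=\sqrt{t^2-4d}$, and $\mu=\xi\,dz|_{\tilde X}$. A $\lambda$-connection on a module $M$ over $\mathbb{C}((\tilde z))[[\lambda]]$ or $\mathbb{C}[[\tilde z,\lambda]]$ is a $\mathbb{C}[[\lambda]]$-linear $\delta$ with $\delta(fs)=f\delta s+\lambda s\,df$. $\widetilde{\mathrm{Conn}}(\tilde X)$: groupoid of $(l,\delta)$, $l$ free of rank 1 over $\mathbb{C}[[\tilde z,\lambda]]$, $\delta:l\to\tilde z^{-1}l\,d\tilde z$ a $\lambda$-connection with residue $-\lambda/2$ and reduction mod $\lambda$ equal to $\mu$. $\widetilde{\mathrm{CC}}(\tilde X)$: groupoid of $(l_u,\delta,l_0)$, $l_u$ free of rank 1 over $\mathbb{C}((\tilde z))[[\lambda]]$, $\delta:l_u\to l_u\,d\tilde z$ a $\lambda$-connection with reduction mod $\lambda$ equal to $\mu$, $l_0$ a $\mathbb{C}[[\tilde z]]$-lattice in $l_u/\lambda l_u$. Morphisms: isomorphisms respecting all structure. The functor sends $(l,\delta)\mapsto(l\otimes\mathbb{C}((\tilde z)),\delta,l/\lambda l)$. The essential fiber of a functor $F:G_1\to G_2$ over $\gamma_2$ is the groupoid of pairs $(\gamma_1,f)$ with $\gamma_1\in G_1$ and $f:F(\gamma_1)\xrightarrow{\sim}\gamma_2$.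 *)

(* Defs.v *)
From HB Require Import structures.
From mathcomp Require Import all_boot all_order all_algebra.
From mathcomp Require Import boolp.
Set Implicit Arguments. Unset Strict Implicit. Unset Printing Implicit Defensive.
Import Order.TTheory GRing.Theory Num.Theory.
Local Open Scope ring_scope.

Section Series.
Variable K : fieldType.

Definition pser := nat -> K.
Definition padd (p q : pser) : pser := fun n => p n + q n.
Definition pscale (c : K) (p : pser) : pser := fun n => c * p n.
Definition pmul (p q : pser) : pser :=
  fun n => \sum_(k < n.+1) p k * q (n - k)%N.
Definition pone : pser := fun n => (n == 0%N)%:R.
Definition ppow (p : pser) (k : nat) : pser := iter k (pmul p) pone.
(* composition f(Z(x)), meaningful when Z 0 = 0 *)
Definition ps_comp (f Z : pser) : pser :=
  fun n => \sum_(k < n.+1) f k * ppow Z k n.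
Definition pder (p : pser) : pser := fun n => p n.+1 *+ n.+1.
Definition pX : pser := fun n => (n == 1%N)%:R.

Definition lser := int -> K.
Definition laurent (f : lser) : Prop :=
  exists N : int, forall n : int, n < N -> f n = 0.
Definition lpow (f : lser) : Prop := forall n : int, n < 0 -> f n = 0.
Definition lpole1 (f : lser) : Prop := forall n : int, n < -1 -> f n = 0.
Definition ps_lift (p : pser) : lser :=
  fun n => match n with Posz k => p k | Negz _ => 0 end.
Definition ladd (f g : lser) : lser := fun n => f n + g n.
Definition lval (f : lser) : int :=
  match pselect (laurent f) with
  | left H => sval (cid H)
  | right _ => 0
  end.
Definition lmul (f g : lser) : lser := fun n =>
  let a := lval f in let b := lval g in
  if ((n - a - b)%R < 0)%R then 0
  else \sum_(k < (absz (n - a - b)%R).+1) f (a + k%:Z)%R * g (n - a - k%:Z)%R.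
Definition lder (f : lser) : lser := fun n => f (n + 1) *~ (n + 1).

Definition lattice (S : lser -> Prop) : Prop :=
  (forall f, S f -> laurent f) /\
  S (fun _ => 0) /\
  (forall f g, S f -> S g -> S (ladd f g)) /\
  (forall c f, lpow c -> S f -> S (lmul c f)) /\
  (exists gs : seq lser, (forall g, g \in gs -> S g) /\
     forall f, S f -> exists cs : seq lser, size cs = size gs /\
       (forall c, c \in cs -> lpow c) /\
       f = foldr ladd (fun _ => 0) [seq lmul cg.1 cg.2 | cg <- zip cs gs]) /\
  (forall f, laurent f -> exists c s, laurent c /\ S s /\ f = lmul c s).

(* ---------- K((x))[[y]]  (x = \tilde z, y = lambda) ---------- *)
Definition LL := nat -> lser.
Definition Lvalid (a : LL) : Prop := forall i, laurent (a i).
Definition Lint (a : LL) : Prop := forall i, lpow (a i).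
Definition Lpole1 (a : LL) : Prop := forall i, lpole1 (a i).
Definition Ladd (a b : LL) : LL := fun i n => a i n + b i n.
Definition Lmul (a b : LL) : LL :=
  fun i n => \sum_(j < i.+1) lmul (a j) (b (i - j)%N) n.
Definition Lder (a : LL) : LL := fun i => lder (a i).
Definition Llam : LL := fun i n => ((i == 1%N) && (n == 0))%:R.
Definition Lcst (c : pser) : LL := fun i n => if n == 0 then c i else 0.
Definition Lc0 (h : lser) : LL := fun i => if i == 0%N then h else (fun _ => 0).

Definition Llin (G : LL -> LL) : Prop :=
  (forall x, Lvalid x -> Lvalid (G x)) /\
  (forall x y, Lvalid x -> Lvalid y ->
     G (Ladd x y) = Ladd (G x) (G y) /\ G (Lmul x y) = Lmul x (G y)).
Definition Liso (G : LL -> LL) : Prop :=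
  Llin G /\ exists H, Llin H /\
    forall x, Lvalid x -> H (G x) = x /\ G (H x) = x.

(* lambda-connections on the module K((x))[[y]] (with values in K((x))[[y]] dx) *)
Definition lconn_u (D : LL -> LL) : Prop :=
  (forall x, Lvalid x -> Lvalid (D x)) /\
  (forall c x y, Lvalid x -> Lvalid y ->
     D (Ladd x y) = Ladd (D x) (D y) /\ D (Lmul (Lcst c) x) = Lmul (Lcst c) (D x)) /\
  (forall f s, Lvalid f -> Lvalid s ->
     D (Lmul f s) = Ladd (Lmul f (D s)) (Lmul Llam (Lmul s (Lder f)))).

(* lambda-connections on the module K[[x, y]] with values in x^{-1}K[[x,y]] dx *)
Definition lconn_int (D : LL -> LL) : Prop :=
  (forall s, Lint s -> Lpole1 (D s)) /\
  (forall c x y, Lint x -> Lint y ->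
     D (Ladd x y) = Ladd (D x) (D y) /\ D (Lmul (Lcst c) x) = Lmul (Lcst c) (D x)) /\
  (forall f s, Lint f -> Lint s ->
     D (Lmul f s) = Ladd (Lmul f (D s)) (Lmul Llam (Lmul s (Lder f)))).

(* the reduction mod lambda of D equals (multiplication by) the form m dx *)
Definition red_is (m : lser) (D : LL -> LL) (dom : LL -> Prop) : Prop :=
  forall s, dom s -> D s 0%N = lmul m (s 0%N).

(* residue of D equals -lambda/2 (as endomorphism of l / x l) *)
Definition res_half (D : LL -> LL) : Prop :=
  forall s, Lint s -> forall i : nat,
    D s i (-1) = match i with 0%N => 0 | j.+1 => - (2%:R)^-1 * s j 0 end.

(* objects of \tilde{Conn}: (l, delta) with l = K[[x, y]] *)
Definition Conn_obj (m : lser) (D : LL -> LL) : Prop :=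
  lconn_int D /\ res_half D /\ red_is m D Lint.

(* objects of \tilde{CC}: (l_u, delta, l_0) with l_u = K((x))[[y]] *)
Definition CC_obj (m : lser) (D : LL -> LL) (l0 : lser -> Prop) : Prop :=
  lconn_u D /\ red_is m D Lvalid /\ lattice l0.

Definition CC_iso (f : LL -> LL) (D1 : LL -> LL) (S1 : lser -> Prop)
                  (D2 : LL -> LL) (S2 : lser -> Prop) : Prop :=
  Liso f /\ (forall x, Lvalid x -> f (D1 x) = D2 (f x)) /\
  (forall h, S2 h <-> exists h0, S1 h0 /\ f (Lc0 h0) 0%N = h).

Definition base_change (D D' : LL -> LL) : Prop :=
  lconn_u D' /\ forall s, Lint s -> D' s = D s.

Record fiber_obj (m : lser) (D : LL -> LL) (l0 : lser -> Prop) := FiberObj {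
  fo_conn : LL -> LL;
  fo_conn_u : LL -> LL;
  fo_iso : LL -> LL;
  fo_conn_ok : Conn_obj m fo_conn;
  fo_bc : base_change fo_conn fo_conn_u;
  fo_iso_ok : CC_iso fo_iso fo_conn_u lpow D l0
}.

(* morphisms (l, delta1, f1) -> (l, delta2, f2) in the essential fiber:
   isomorphisms g of (l,delta) in \tilde{Conn} with f2 o F(g) = f1 *)
Definition fiber_hom m D l0 (o1 o2 : fiber_obj m D l0) (g : LL -> LL) : Prop :=
  (forall s, Lint s -> Lint (g s)) /\
  (forall s', Lint s' -> exists s, Lint s /\ g s = s') /\
  (forall s1 s2, Lint s1 -> Lint s2 -> g s1 = g s2 -> s1 = s2) /\
  (forall f s1 s2, Lint f -> Lint s1 -> Lint s2 ->
      g (Ladd s1 s2) = Ladd (g s1) (g s2) /\ g (Lmul f s1) = Lmul f (g s1)) /\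
  (* G = g (x) id : the base change F(g) of g *)
  exists G, Llin G /\ (forall s, Lint s -> G s = g s) /\
    (forall s, Lint s -> G (fo_conn o1 s) = fo_conn o2 (g s)) /\
    (forall x, Lvalid x -> fo_iso o2 (G x) = fo_iso o1 x).

End Series.
Arguments Llam {K}.
Arguments pX {K}.
Arguments pone {K}.

Section Spectral.
Variable K : fieldType.
Definition disc (t d : pser K) : pser K :=
  padd (pmul t t) (pscale (- 4%:R) d).
(* mu = xi dz restricted to \tilde X, written m(\tilde z) d\tilde z, where
   z = Z(\tilde z) and xi = (t(Z) + \tilde z)/2 *)
Definition mu_coef (t Z : pser K) : lser K :=
  ps_lift (pmul (pscale (2%:R)^-1 (padd (ps_comp t Z) pX)) (pder Z)).
End Spectral.

(* Main.v *)
Require Import Defs.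
From HB Require Import structures.
From mathcomp Require Import all_boot all_order all_algebra.
From mathcomp Require Import boolp reals complex.
From mathcomp Require Import ring lra zify.
Import Order.TTheory GRing.Theory Num.Theory.
Local Open Scope ring_scope.

Set Implicit Arguments. Unset Strict Implicit. Unset Printing Implicit Defensive.

Section Lau.
Variable K : fieldType.
Implicit Types f g h : lser K.

Definition vb (A : int) f := forall n : int, n < A -> f n = 0.

Lemma lval_vb f : laurent f -> vb (lval f) f.
Proof. move=> H; rewrite /lval; case: pselect => // H'; exact: (svalP (cid H')). Qed.

Definition conv (A B : int) f g (n : int) : K :=
  if (n - A - B < 0) then 0
  else \sum_(k < (absz (n - A - B)%R).+1) f (A + k%:Z) * g (n - A - k%:Z).

Lemma lmul_conv f g (n : int) : lmul f g n = conv (lval f) (lval g) f g n.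
Proof. by []. Qed.

Lemma conv_pos A B f g n (p : nat) : n - A - B = p%:Z ->
  conv A B f g n = \sum_(k < p.+1) f (A + k%:Z) * g (n - A - k%:Z).
Proof. by move=> e; rewrite /conv e ltNge lez_nat /=. Qed.

Lemma conv_neg A B f g n : n - A - B < 0 -> conv A B f g n = 0.
Proof. by rewrite /conv => ->. Qed.

Lemma sign_cases (m : int) : (exists p : nat, m = p%:Z) \/ m = -1 \/ m < -1.
Proof. case: m => p; first by left; exists p. right; case: p => [|p]; [by left|right].
by rewrite NegzE; lia. Qed.

Lemma convA1 A B f g n : f (A - 1) = 0 -> conv (A - 1) B f g n = conv A B f g n.
Proof.
move=> f0; case: (sign_cases (n - A - B)) => [[p e]|[e|e]].
- have e' : n - (A - 1) - B = (p.+1)%:Z by lia.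
  rewrite (conv_pos _ _ e) (conv_pos _ _ e').
  rewrite big_ord_recl /= addr0 f0 mul0r add0r; apply: eq_bigr => k _.
  rewrite /bump /=; congr (f _ * g _); lia.
- have e' : n - (A - 1) - B = 0%:Z by lia.
  rewrite (conv_pos _ _ e') conv_neg; last by lia.
  by rewrite big_ord1 /= addr0 f0 mul0r.
- by rewrite !conv_neg //; lia.
Qed.

Lemma convB1 A B f g n : g (B - 1) = 0 -> conv A (B - 1) f g n = conv A B f g n.
Proof.
move=> g0; case: (sign_cases (n - A - B)) => [[p e]|[e|e]].
- have e' : n - A - (B - 1) = (p.+1)%:Z by lia.
  rewrite (conv_pos _ _ e) (conv_pos _ _ e').
  rewrite big_ord_recr /=.
  have -> : n - A - (p.+1)%:Z = B - 1 by lia.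
  by rewrite g0 mulr0 addr0.
- have e' : n - A - (B - 1) = 0%:Z by lia.
  rewrite (conv_pos _ _ e') conv_neg; last by lia.
  rewrite big_ord1 /=; have -> : n - A - 0%:Z = B - 1 by lia.
  by rewrite g0 mulr0.
- by rewrite !conv_neg //; lia.
Qed.

Lemma conv_lowA A B f g n (i : nat) : vb A f -> conv (A - i%:Z) B f g n = conv A B f g n.
Proof.
move=> vf; elim: i => [|i IH]; first by rewrite subr0.
rewrite -IH -(@convA1 (A - i%:Z)); first by congr conv; lia.
by apply: vf; lia.
Qed.

Lemma conv_lowB A B f g n (i : nat) : vb B g -> conv A (B - i%:Z) f g n = conv A B f g n.
Proof.
move=> vg; elim: i => [|i IH]; first by rewrite subr0.
rewrite -IH -(@convB1 _ (B - i%:Z)); first by congr conv; lia.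
by apply: vg; lia.
Qed.

Lemma conv_low A B A' B' f g n : vb A f -> vb B g -> A' <= A -> B' <= B ->
  conv A' B' f g n = conv A B f g n.
Proof.
move=> vf vg hA hB.
have eA : A' = A - (absz (A - A'))%:Z by lia.
have eB : B' = B - (absz (B - B'))%:Z by lia.
by rewrite eA eB conv_lowB ?conv_lowA.
Qed.

Lemma vb_low A A' f : vb A f -> A' <= A -> vb A' f.
Proof. move=> v h n hn; apply: v; lia. Qed.

Lemma lmul_convE A B f g (n : int) : laurent f -> laurent g -> vb A f -> vb B g ->
  lmul f g n = conv A B f g n.
Proof.
move=> lf lg vf vg; rewrite lmul_conv.
rewrite -(@conv_low (lval f) (lval g) (Num.min A (lval f)) (Num.min B (lval g))) //;
  try exact: lval_vb; try by rewrite ge_min lexx orbT.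
by rewrite (@conv_low A B) //; rewrite ge_min lexx.
Qed.


Definition Pl (A : int) (M : nat) f : {poly K} := \poly_(k < M) f (A + k%:Z).

Lemma coefPl A m f k : (k <= m)%N -> (Pl A m.+1 f)`_k = f (A + k%:Z).
Proof. by move=> h; rewrite coef_poly ltnS h. Qed.

Lemma conv_poly A B f g n m (p q : {poly K}) : n - A - B = m%:Z ->
  (forall k, (k <= m)%N -> p`_k = f (A + k%:Z)) ->
  (forall k, (k <= m)%N -> q`_k = g (B + k%:Z)) ->
  conv A B f g n = (p * q)`_m.
Proof.
move=> e hp hq; rewrite (conv_pos _ _ e) coefM; apply: eq_bigr => k _.
have hk : (k <= m)%N by rewrite -ltnS.
rewrite hp // hq ?leq_subr //; congr (_ * g _); lia.
Qed.

Lemma lmul_poly A B f g n m (p q : {poly K}) : laurent f -> laurent g ->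
  vb A f -> vb B g -> n - A - B = m%:Z ->
  (forall k, (k <= m)%N -> p`_k = f (A + k%:Z)) ->
  (forall k, (k <= m)%N -> q`_k = g (B + k%:Z)) ->
  lmul f g n = (p * q)`_m.
Proof. move=> lf lg vf vg e hp hq; rewrite (lmul_convE _ lf lg vf vg); exact: conv_poly. Qed.

Lemma lmul_vb A B f g : laurent f -> laurent g -> vb A f -> vb B g -> vb (A + B) (lmul f g).
Proof. move=> lf lg vf vg n hn; rewrite (lmul_convE _ lf lg vf vg) conv_neg //; lia. Qed.

Lemma laurent_vb f : laurent f -> exists A, vb A f.
Proof. by move=> [A HA]; exists A. Qed.

Lemma vb_laurent A f : vb A f -> laurent f.
Proof. by move=> v; exists A. Qed.

Lemma laurent_lmul f g : laurent f -> laurent g -> laurent (lmul f g).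
Proof.
move=> lf lg; have vf := lval_vb lf; have vg := lval_vb lg.
exact: vb_laurent (lmul_vb lf lg vf vg).
Qed.

Lemma vb_ladd A f g : vb A f -> vb A g -> vb A (ladd f g).
Proof. by move=> vf vg n hn; rewrite /ladd vf ?vg ?addr0. Qed.

Lemma laurent_ladd f g : laurent f -> laurent g -> laurent (ladd f g).
Proof.
move=> [A vA] [B vB]; exists (Num.min A B) => n hn.
rewrite /ladd vA ?vB ?addr0 //; move: hn; rewrite lt_min => /andP[]//.
Qed.

Lemma lmul_neg A B f g n : laurent f -> laurent g -> vb A f -> vb B g -> n - A - B < 0 ->
  lmul f g n = 0.
Proof. move=> lf lg vf vg h; rewrite (lmul_convE _ lf lg vf vg) conv_neg //. Qed.

Lemma lmulC f g : laurent f -> laurent g -> lmul f g = lmul g f.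
Proof.
move=> lf lg; apply/funext => n.
have vf := lval_vb lf; have vg := lval_vb lg.
set A := lval f in vf *; set B := lval g in vg *.
case: (sign_cases (n - A - B)) => [[m e]|[e|e]].
- rewrite (lmul_poly (m := m) (p := Pl A m.+1 f) (q := Pl B m.+1 g) lf lg vf vg e);
    try by move=> k hk; rewrite coefPl.
  have e' : n - B - A = m%:Z by lia.
  rewrite (lmul_poly (m := m) (p := Pl B m.+1 g) (q := Pl A m.+1 f) lg lf vg vf e');
    try by move=> k hk; rewrite coefPl.
  by rewrite mulrC.
- rewrite (lmul_neg lf lg vf vg) ?(lmul_neg lg lf vg vf) //; lia.
- rewrite (lmul_neg lf lg vf vg) ?(lmul_neg lg lf vg vf) //; lia.
Qed.


Lemma lmulA f g h : laurent f -> laurent g -> laurent h ->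
  lmul f (lmul g h) = lmul (lmul f g) h.
Proof.
move=> lf lg lh; apply/funext => n.
have vf := lval_vb lf; have vg := lval_vb lg; have vh := lval_vb lh.
set A := lval f in vf *; set B := lval g in vg *; set C := lval h in vh *.
have lfg := laurent_lmul lf lg; have lgh := laurent_lmul lg lh.
have vfg := lmul_vb lf lg vf vg; have vgh := lmul_vb lg lh vg vh.
case: (sign_cases (n - A - B - C)) => [[m e]|[e|e]]; last first.
- rewrite (lmul_neg lf lgh vf vgh) ?(lmul_neg lfg lh vfg vh) //; lia.
- rewrite (lmul_neg lf lgh vf vgh) ?(lmul_neg lfg lh vfg vh) //; lia.
have e1 : n - A - (B + C) = m%:Z by lia.
have e2 : n - (A + B) - C = m%:Z by lia.
rewrite (lmul_poly (m := m) (p := Pl A m.+1 f) (q := Pl B m.+1 g * Pl C m.+1 h) lf lgh vf vgh e1);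
  [| by move=> k hk; rewrite coefPl |].
rewrite (lmul_poly (m := m) (p := Pl A m.+1 f * Pl B m.+1 g) (q := Pl C m.+1 h) lfg lh vfg vh e2);
  [by rewrite mulrA | | by move=> k hk; rewrite coefPl].
- move=> k hk; symmetry; apply: (lmul_poly lf lg vf vg); first by lia.
  + by move=> j hj; rewrite coefPl //; apply: leq_trans hk.
  + by move=> j hj; rewrite coefPl //; apply: leq_trans hk.
- move=> k hk; symmetry; apply: (lmul_poly lg lh vg vh); first by lia.
  + by move=> j hj; rewrite coefPl //; apply: leq_trans hk.
  + by move=> j hj; rewrite coefPl //; apply: leq_trans hk.
Qed.

Lemma lmulDr f g h : laurent f -> laurent g -> laurent h ->
  lmul f (ladd g h) = ladd (lmul f g) (lmul f h).
Proof.
move=> lf lg lh; apply/funext => n.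
have vf := lval_vb lf; set A := lval f in vf *.
have [B vg vh] : exists2 B, vb B g & vb B h.
  exists (Num.min (lval g) (lval h)).
  + by apply: vb_low (lval_vb lg) _; rewrite ge_min lexx.
  + by apply: vb_low (lval_vb lh) _; rewrite ge_min lexx orbT.
have lgh := laurent_ladd lg lh; have vgh := vb_ladd vg vh.
rewrite /ladd.
case: (sign_cases (n - A - B)) => [[m e]|[e|e]].
- rewrite (lmul_poly (m := m) (p := Pl A m.+1 f) (q := Pl B m.+1 g + Pl B m.+1 h) lf lgh vf vgh e);
   [| by move=> k hk; rewrite coefPl | by move=> k hk; rewrite coefD !coefPl].
  rewrite (lmul_poly (m := m) (p := Pl A m.+1 f) (q := Pl B m.+1 g) lf lg vf vg e);
   try by move=> k hk; rewrite coefPl.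
  rewrite (lmul_poly (m := m) (p := Pl A m.+1 f) (q := Pl B m.+1 h) lf lh vf vh e);
   try by move=> k hk; rewrite coefPl.
  by rewrite mulrDr coefD.
- by rewrite !(lmul_neg _ _ vf vg, lmul_neg _ _ vf vh, lmul_neg _ _ vf vgh) ?addr0 //; lia.
- by rewrite !(lmul_neg _ _ vf vg, lmul_neg _ _ vf vh, lmul_neg _ _ vf vgh) ?addr0 //; lia.
Qed.

Definition lone : lser K := fun n => (n == 0)%:R.

Lemma vb_lone : vb 0 lone.
Proof. by move=> n hn; rewrite /lone; case: eqP => // e; move: hn; rewrite e. Qed.

Lemma laurent_lone : laurent lone.
Proof. exact: vb_laurent vb_lone. Qed.

Lemma lmul1 f : laurent f -> lmul lone f = f.
Proof.
move=> lf; apply/funext => n.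
have vf := lval_vb lf; set B := lval f in vf *.
case: (sign_cases (n - 0 - B)) => [[m e]|[e|e]].
- rewrite (lmul_poly (m := m) (p := 1) (q := Pl B m.+1 f) laurent_lone lf vb_lone vf e).
  + by rewrite mul1r coefPl //; congr f; lia.
  + by move=> k hk; rewrite coef1 /lone add0r eqz_nat.
  + by move=> k hk; rewrite coefPl.
- rewrite (lmul_neg laurent_lone lf vb_lone vf) ?vf //; lia.
- rewrite (lmul_neg laurent_lone lf vb_lone vf) ?vf //; lia.
Qed.


Lemma lder_vb A f : vb A f -> vb (A - 1) (lder f).
Proof. by move=> v n hn; rewrite /lder v ?mul0rz //; lia. Qed.

Lemma laurent_lder f : laurent f -> laurent (lder f).
Proof. by move=> [A v]; exact: vb_laurent (lder_vb v). Qed.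

Lemma lder_add f g : lder (ladd f g) = ladd (lder f) (lder g).
Proof. by apply/funext => n; rewrite /lder /ladd mulrzDl. Qed.

Lemma lder_mul f g : laurent f -> laurent g ->
  lder (lmul f g) = ladd (lmul (lder f) g) (lmul f (lder g)).
Proof.
move=> lf lg; apply/funext => n.
have vf := lval_vb lf; set A := lval f in vf *.
have vg := lval_vb lg; set B := lval g in vg *.
have lf' := laurent_lder lf; have lg' := laurent_lder lg.
have vf' := lder_vb vf; have vg' := lder_vb vg.
rewrite /lder /ladd (lmul_convE _ lf lg vf vg) (lmul_convE _ lf' lg vf' vg)
   (lmul_convE _ lf lg' vf vg').
case: (sign_cases (n + 1 - A - B)) => [[m e]|[e|e]].
- have e1 : n - (A - 1) - B = m%:Z by lia.
  have e2 : n - A - (B - 1) = m%:Z by lia.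
  rewrite (conv_pos _ _ e) (conv_pos _ _ e1) (conv_pos _ _ e2) -big_split /=.
  rewrite mulrz_suml; apply: eq_bigr => k _.
  rewrite /lder.
  have -> : A - 1 + k%:Z + 1 = A + k%:Z by lia.
  have -> : n - (A - 1) - k%:Z = n + 1 - A - k%:Z by lia.
  have -> : n - A - k%:Z + 1 = n + 1 - A - k%:Z by lia.
  rewrite mulrzAl mulrzAr -mulrzDr; congr (_ *~ _); lia.
- rewrite !conv_neg ?mul0rz ?addr0 //; lia.
- rewrite !conv_neg ?mul0rz ?addr0 //; lia.
Qed.

End Lau.

Section LaurRing.
Variable K : fieldType.

Definition Laur := {f : lser K | laurent f}.
HB.instance Definition _ := gen_eqMixin Laur.
HB.instance Definition _ := gen_choiceMixin Laur.

Definition lv (x : Laur) : lser K := proj1_sig x.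
Lemma lvP (x : Laur) : laurent (lv x). Proof. exact: proj2_sig x. Qed.

Lemma lv_inj (x y : Laur) : lv x = lv y -> x = y.
Proof.
case: x => f hf; case: y => g hg /= e; subst g.
by congr exist; apply: Prop_irrelevance.
Qed.

Lemma laurent0 : laurent (fun _ : int => 0 : K).
Proof. by exists 0. Qed.
Lemma laurent_opp f : laurent f -> laurent (fun n => - f n : K).
Proof. by move=> [A h]; exists A => n hn; rewrite h ?oppr0. Qed.

Definition L0 : Laur := exist _ _ laurent0.
Definition Lopp (x : Laur) : Laur := exist _ _ (laurent_opp (lvP x)).
Definition Ladd' (x y : Laur) : Laur := exist _ _ (laurent_ladd (lvP x) (lvP y)).
Definition L1 : Laur := exist _ _ (@laurent_lone K).
Definition Lmul' (x y : Laur) : Laur := exist _ _ (laurent_lmul (lvP x) (lvP y)).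

Lemma LaddA : associative Ladd'.
Proof. by move=> x y z; apply: lv_inj; apply/funext => n; rewrite /= /ladd addrA. Qed.
Lemma LaddC : commutative Ladd'.
Proof. by move=> x y; apply: lv_inj; apply/funext => n; rewrite /= /ladd addrC. Qed.
Lemma Ladd0 : left_id L0 Ladd'.
Proof. by move=> x; apply: lv_inj; apply/funext => n; rewrite /= /ladd add0r. Qed.
Lemma LaddN : left_inverse L0 Lopp Ladd'.
Proof. by move=> x; apply: lv_inj; apply/funext => n; rewrite /= /ladd addNr. Qed.

HB.instance Definition _ := GRing.isZmodule.Build Laur LaddA LaddC Ladd0 LaddN.

Lemma LmulA : associative Lmul'.
Proof. by move=> x y z; apply: lv_inj; rewrite /= lmulA //; apply: lvP. Qed.
Lemma LmulC : commutative Lmul'.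
Proof. by move=> x y; apply: lv_inj; rewrite /= lmulC //; apply: lvP. Qed.
Lemma Lmul1 : left_id L1 Lmul'.
Proof. by move=> x; apply: lv_inj; rewrite /= lmul1 //; apply: lvP. Qed.
Lemma LmulDl : left_distributive Lmul' Ladd'.
Proof.
move=> x y z; apply: lv_inj; rewrite /= lmulC; last 2 first.
- exact: laurent_ladd (lvP _) (lvP _).
- exact: lvP.
rewrite lmulDr ?(lmulC (lvP z)) //; exact: lvP.
Qed.
Lemma L1_neq0 : L1 != L0.
Proof.
apply/eqP => e; have := congr1 (fun x => lv x 0) e; rewrite /= /lone eqxx /=.
by move/eqP; rewrite oner_eq0.
Qed.

HB.instance Definition _ := GRing.Zmodule_isComNzRing.Build Laur LmulA LmulC Lmul1 LmulDl L1_neq0.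

Lemma lvD (x y : Laur) : lv (x + y) = ladd (lv x) (lv y). Proof. by []. Qed.
Lemma lvM (x y : Laur) : lv (x * y) = lmul (lv x) (lv y). Proof. by []. Qed.
Lemma lv1 : lv 1 = lone K. Proof. by []. Qed.
Lemma lv0 n : lv 0 n = 0. Proof. by []. Qed.
Lemma lvN (x : Laur) n : lv (- x) n = - lv x n. Proof. by []. Qed.
Lemma lvDn (x y : Laur) n : lv (x + y) n = lv x n + lv y n. Proof. by []. Qed.
Lemma lvB (x y : Laur) n : lv (x - y) n = lv x n - lv y n. Proof. by []. Qed.

Lemma lv_sum I (r : seq I) (P : pred I) (F : I -> Laur) n :
  lv (\sum_(i <- r | P i) F i) n = \sum_(i <- r | P i) lv (F i) n.
Proof.
by apply: (big_morph (fun x => lv x n)) => // x y; rewrite lvDn.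
Qed.

Lemma lvMn (x : Laur) k n : lv (x *+ k) n = lv x n *+ k.
Proof. by elim: k => [|k IH]; rewrite ?mulr0n // !mulrS lvDn IH. Qed.

End LaurRing.

Section PSRing.
Variable K : fieldType.
Local Notation Lr := (Laur K).

Record PS := mkPS { pc : nat -> Lr }.
HB.instance Definition _ := gen_eqMixin PS.
HB.instance Definition _ := gen_choiceMixin PS.

Lemma ps_eq (u v : PS) : (forall i, pc u i = pc v i) -> u = v.
Proof. by case: u => u; case: v => v /= h; congr mkPS; apply/funext. Qed.

Definition P0 : PS := mkPS (fun _ => 0).
Definition Popp (u : PS) : PS := mkPS (fun i => - pc u i).
Definition Padd (u v : PS) : PS := mkPS (fun i => pc u i + pc v i).
Definition P1 : PS := mkPS (fun i => (i == 0)%:R).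
Definition Pmul (u v : PS) : PS :=
  mkPS (fun i => \sum_(j < i.+1) pc u j * pc v (i - j)).

Lemma PaddA : associative Padd.
Proof. by move=> x y z; apply: ps_eq => i /=; rewrite addrA. Qed.
Lemma PaddC : commutative Padd.
Proof. by move=> x y; apply: ps_eq => i /=; rewrite addrC. Qed.
Lemma Padd0 : left_id P0 Padd.
Proof. by move=> x; apply: ps_eq => i /=; rewrite add0r. Qed.
Lemma PaddN : left_inverse P0 Popp Padd.
Proof. by move=> x; apply: ps_eq => i /=; rewrite addNr. Qed.

HB.instance Definition _ := GRing.isZmodule.Build PS PaddA PaddC Padd0 PaddN.

Definition Qp (i : nat) (u : PS) : {poly Lr} := \poly_(j < i.+1) pc u j.
Lemma coefQp i u k : (k <= i)%N -> (Qp i u)`_k = pc u k.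
Proof. by move=> h; rewrite coef_poly ltnS h. Qed.

Lemma Pmul_poly u v i (p q : {poly Lr}) :
  (forall k, (k <= i)%N -> p`_k = pc u k) -> (forall k, (k <= i)%N -> q`_k = pc v k) ->
  pc (Pmul u v) i = (p * q)`_i.
Proof.
move=> hp hq; rewrite coefM /=; apply: eq_bigr => k _.
have hk : (k <= i)%N by rewrite -ltnS.
by rewrite hp // hq // leq_subr.
Qed.

Lemma PmulA : associative Pmul.
Proof.
move=> x y z; apply: ps_eq => i.
rewrite (Pmul_poly (p := Qp i x) (q := Qp i y * Qp i z)); last first.
- move=> k hk; symmetry; apply: Pmul_poly => j hj; rewrite coefQp //; exact: leq_trans hk.
- by move=> k hk; rewrite coefQp.
rewrite (Pmul_poly (p := Qp i x * Qp i y) (q := Qp i z)); last first.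
- by move=> k hk; rewrite coefQp.
- move=> k hk; symmetry; apply: Pmul_poly => j hj; rewrite coefQp //; exact: leq_trans hk.
by rewrite mulrA.
Qed.

Lemma PmulC : commutative Pmul.
Proof.
move=> x y; apply: ps_eq => i.
rewrite (Pmul_poly (p := Qp i x) (q := Qp i y)) ?(Pmul_poly (p := Qp i y) (q := Qp i x));
  try by move=> k hk; rewrite coefQp.
by rewrite mulrC.
Qed.

Lemma Pmul1 : left_id P1 Pmul.
Proof.
move=> x; apply: ps_eq => i.
rewrite (Pmul_poly (p := 1) (q := Qp i x)) ?mul1r ?coefQp //.
- by move=> k hk; rewrite coef1.
- by move=> k hk; rewrite coefQp.
Qed.

Lemma PmulDl : left_distributive Pmul Padd.
Proof.
move=> x y z; apply: ps_eq => i /=.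
rewrite -big_split /=; apply: eq_bigr => k _; by rewrite mulrDl.
Qed.

Lemma P1_neq0 : P1 != P0.
Proof.
apply/eqP => e; have := congr1 (fun u => pc u 0) e => /= /eqP.
by rewrite oner_eq0.
Qed.

HB.instance Definition _ := GRing.Zmodule_isComNzRing.Build PS PmulA PmulC Pmul1 PmulDl P1_neq0.

Lemma pcD u v i : pc (u + v) i = pc u i + pc v i. Proof. by []. Qed.
Lemma pcN u i : pc (- u) i = - pc u i. Proof. by []. Qed.
Lemma pcB u v i : pc (u - v) i = pc u i - pc v i. Proof. by []. Qed.
Lemma pc0 i : pc 0 i = 0. Proof. by []. Qed.
Lemma pc1 i : pc 1 i = (i == 0)%:R. Proof. by []. Qed.
Lemma pcM u v i : pc (u * v) i = \sum_(j < i.+1) pc u j * pc v (i - j). Proof. by []. Qed.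
Lemma pcM0 u v : pc (u * v) 0 = pc u 0 * pc v 0.
Proof. by rewrite pcM big_ord1. Qed.

Lemma pc_sum I (r : seq I) (P : pred I) (F : I -> PS) i :
  pc (\sum_(k <- r | P k) F k) i = \sum_(k <- r | P k) pc (F k) i.
Proof. by apply: (big_morph (fun x => pc x i)) => // x y; rewrite pcD. Qed.

Lemma pcMn u k i : pc (u *+ k) i = pc u i *+ k.
Proof. by elim: k => [|k IH]; rewrite ?mulr0n // !mulrS pcD IH. Qed.

End PSRing.

Section Diff.
Variable K : fieldType.
Local Notation Lr := (Laur K).
Local Notation PS := (PS K).

Definition Ld (x : Lr) : Lr := exist _ _ (laurent_lder (lvP x)).
Lemma lvLd x : lv (Ld x) = lder (lv x). Proof. by []. Qed.

Lemma LdD x y : Ld (x + y) = Ld x + Ld y.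
Proof. by apply: lv_inj; rewrite /= lder_add. Qed.
Lemma Ld0 : Ld 0 = 0.
Proof. by apply: lv_inj; apply/funext => n; rewrite /= /lder mul0rz. Qed.
Lemma LdN x : Ld (- x) = - Ld x.
Proof. by apply: lv_inj; apply/funext => n; rewrite /= /lder mulNrz. Qed.
Lemma LdB x y : Ld (x - y) = Ld x - Ld y.
Proof. by rewrite LdD LdN. Qed.
Lemma LdM x y : Ld (x * y) = Ld x * y + x * Ld y.
Proof. by apply: lv_inj; rewrite /= lder_mul //; apply: lvP. Qed.
Lemma Ld_sum I (r : seq I) (P : pred I) (F : I -> Lr) :
  Ld (\sum_(i <- r | P i) F i) = \sum_(i <- r | P i) Ld (F i).
Proof. exact: (big_morph Ld LdD Ld0). Qed.
Lemma LdMn x k : Ld (x *+ k) = Ld x *+ k.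
Proof. by elim: k => [|k IH]; rewrite ?mulr0n ?Ld0 // !mulrS LdD IH. Qed.
Lemma Ld1 : Ld 1 = 0.
Proof.
apply: lv_inj; apply/funext => n; rewrite /= /lder /lone.
by case: (n + 1 =P 0) => [->|_]; rewrite ?mulr0z ?mul0rz.
Qed.
Lemma Ldn k : Ld (k%:R) = 0.
Proof. by rewrite LdMn Ld1 mul0rn. Qed.

Definition ofPS (u : PS) : LL K := fun i => lv (pc u i).
Lemma ofPS_valid u : Lvalid (ofPS u).
Proof. by move=> i; apply: lvP. Qed.
Lemma ofPS_inj u v : ofPS u = ofPS v -> u = v.
Proof. by move=> e; apply: ps_eq => i; apply: lv_inj; exact: (congr1 (fun a => a i) e). Qed.
Lemma valid_ofPS (a : LL K) : Lvalid a -> exists u, a = ofPS u.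
Proof.
move=> h; exists (mkPS (fun i => exist _ (a i) (h i) : Lr)).
by apply/funext => i.
Qed.
Lemma ofPS_add u v : Ladd (ofPS u) (ofPS v) = ofPS (u + v).
Proof. by []. Qed.
Lemma ofPS_mul u v : Lmul (ofPS u) (ofPS v) = ofPS (u * v).
Proof.
apply/funext => i; apply/funext => n; rewrite /Lmul /ofPS pcM lv_sum.
by apply: eq_bigr => j _; rewrite lvM.
Qed.
Definition PD (u : PS) : PS := mkPS (fun i => Ld (pc u i)).
Lemma ofPS_der u : Lder (ofPS u) = ofPS (PD u). Proof. by []. Qed.

Definition lam : PS := mkPS (fun i => (i == 1)%:R).
Lemma ofPS_lam : Llam = ofPS lam.
Proof.
apply/funext => i; apply/funext => n; rewrite /Llam /ofPS /= lvMn /= /lone.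
by case: (i == 1); case: (n == 0).
Qed.

Lemma laurent_k (c : K) : laurent (fun n : int => if n == 0 then c else 0).
Proof. by exists 0 => n hn; case: eqP hn => // ->. Qed.
Definition Lk (c : K) : Lr := exist _ _ (laurent_k c).
Definition cstP (c : pser K) : PS := mkPS (fun i => Lk (c i)).
Lemma ofPS_cst c : Lcst c = ofPS (cstP c). Proof. by []. Qed.

Definition c0 (x : Lr) : PS := mkPS (fun i => if i == 0%N then x else 0).
Lemma ofPS_c0 (x : Lr) : Lc0 (lv x) = ofPS (c0 x).
Proof. by apply/funext => i; rewrite /Lc0 /ofPS /=; case: (i == 0%N). Qed.

Lemma ofPS_one : Lc0 (lone K) = ofPS 1.
Proof. by apply/funext => i; apply/funext => n; rewrite /Lc0 /ofPS /= lvMn /=; case: (i == 0%N). Qed.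

Lemma PDD u v : PD (u + v) = PD u + PD v.
Proof. by apply: ps_eq => i; rewrite /= LdD. Qed.
Lemma PDN u : PD (- u) = - PD u.
Proof. by apply: ps_eq => i; rewrite /= LdN. Qed.
Lemma PDB u v : PD (u - v) = PD u - PD v.
Proof. by rewrite PDD PDN. Qed.
Lemma PDM u v : PD (u * v) = PD u * v + u * PD v.
Proof.
apply: ps_eq => i; rewrite /= Ld_sum -big_split /=.
by apply: eq_bigr => j _; rewrite LdM.
Qed.
Lemma PD1 : PD 1 = 0.
Proof. by apply: ps_eq => i; rewrite /= Ldn. Qed.
Lemma PDlam : PD lam = 0.
Proof. by apply: ps_eq => i; rewrite /= Ldn. Qed.
Lemma Ld_k c : Ld (Lk c) = 0.
Proof.
apply: lv_inj; apply/funext => n; rewrite /= /lder.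
by case: (n + 1 =P 0) => [->|_]; rewrite ?mulr0z ?mul0rz.
Qed.
Lemma PDcst c : PD (cstP c) = 0.
Proof. by apply: ps_eq => i; rewrite /= Ld_k. Qed.
Lemma PDc0 x : PD (c0 x) = c0 (Ld x).
Proof. by apply: ps_eq => i; rewrite /=; case: (i == 0%N); rewrite ?Ld0. Qed.

Lemma c0M x y : c0 x * c0 y = c0 (x * y).
Proof.
apply: ps_eq => i; rewrite pcM /=; case: i => [|i].
  by rewrite big_ord1.
rewrite big_ord_recl /= mulr0 add0r big1 // => j _.
by rewrite /= mul0r.
Qed.
Lemma c01 : c0 1 = 1.
Proof. by apply: ps_eq => i; rewrite /=; case: (i == 0%N). Qed.
Lemma c0D x y : c0 (x + y) = c0 x + c0 y.
Proof. by apply: ps_eq => i; rewrite /=; case: (i == 0%N); rewrite ?addr0. Qed.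

Definition PE (u : PS) : PS := mkPS (fun i => pc u i *+ i).
Lemma PED u v : PE (u + v) = PE u + PE v.
Proof. by apply: ps_eq => i; rewrite /= mulrnDl. Qed.
Lemma PEN u : PE (- u) = - PE u.
Proof. by apply: ps_eq => i; rewrite /= mulNrn. Qed.
Lemma PEB u v : PE (u - v) = PE u - PE v.
Proof. by rewrite PED PEN. Qed.
Lemma PEM u v : PE (u * v) = PE u * v + u * PE v.
Proof.
apply: ps_eq => i; rewrite /= -big_split /= -sumrMnl.
apply: eq_bigr => j _; rewrite /= mulrnAl mulrnAr -mulrnDr.
by congr (_ *+ _); rewrite subnKC // -ltnS.
Qed.
Lemma PE_PD u : PE (PD u) = PD (PE u).
Proof. by apply: ps_eq => i; rewrite /= LdMn. Qed.

End Diff.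

Section Diff2.
Variable K : fieldType.
Hypothesis hchar : forall n : nat, (n.+1)%:R != 0 :> K.
Local Notation Lr := (Laur K).
Local Notation PS := (PS K).

Lemma Kmulrn_inj (c : K) k : c *+ k.+1 = 0 -> c = 0.
Proof. by rewrite -mulr_natr => /eqP; rewrite mulf_eq0 (negbTE (hchar k)) orbF => /eqP. Qed.

Lemma Lmulrn_inj (x : Lr) k : x *+ k.+1 = 0 -> x = 0.
Proof.
move=> e; apply: lv_inj; apply/funext => n; apply: (@Kmulrn_inj _ k).
by rewrite -lvMn e.
Qed.

Lemma laurent_sc (c : K) (x : Lr) : laurent (fun n => c * lv x n).
Proof. by case: (lvP x) => A h; exists A => n hn; rewrite h ?mulr0. Qed.
Definition Lsc (c : K) (x : Lr) : Lr := exist _ _ (laurent_sc c x).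
Lemma Lsc_inv k (x : Lr) : Lsc (k.+1%:R)^-1 x *+ k.+1 = x.
Proof.
apply: lv_inj; apply/funext => n; rewrite lvMn /= -mulrnAl -mulr_natr mulVf ?mul1r //.
Qed.

Definition ipow (x : Lr) := lpow (lv x).
Definition ipole (x : Lr) := lpole1 (lv x).
Definition res (x : Lr) := lv x (-1).

Lemma ipow_vb x : ipow x <-> vb 0 (lv x). Proof. by []. Qed.
Lemma ipole_vb x : ipole x <-> vb (-1) (lv x). Proof. by []. Qed.

Lemma ipow0 : ipow 0. Proof. by []. Qed.
Lemma ipow1 : ipow 1.
Proof. by move=> n hn; rewrite /= /lone; case: eqP hn => // ->. Qed.
Lemma ipowD x y : ipow x -> ipow y -> ipow (x + y).
Proof. by move=> hx hy n hn; rewrite lvDn hx ?hy ?addr0. Qed.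
Lemma ipowN x : ipow x -> ipow (- x).
Proof. by move=> hx n hn; rewrite lvN hx ?oppr0. Qed.
Lemma ipowB x y : ipow x -> ipow y -> ipow (x - y).
Proof. by move=> hx hy; apply: ipowD => //; apply: ipowN. Qed.
Lemma ipowM x y : ipow x -> ipow y -> ipow (x * y).
Proof.
move=> hx hy; rewrite /ipow lvM; have := lmul_vb (lvP x) (lvP y) hx hy.
by rewrite addr0.
Qed.
Lemma ipowMn x k : ipow x -> ipow (x *+ k).
Proof. by move=> hx n hn; rewrite lvMn hx ?mul0rn. Qed.
Lemma ipow_sum I (r : seq I) (P : pred I) (F : I -> Lr) :
  (forall i, P i -> ipow (F i)) -> ipow (\sum_(i <- r | P i) F i).
Proof. by move=> h; apply: big_ind; [exact: ipow0 | exact: ipowD | exact: h]. Qed.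
Lemma ipowLd x : ipow x -> ipow (Ld x).
Proof.
move=> hx n hn; rewrite lvLd /lder.
case: (sign_cases (n + 1)) => [[m e]|[e|e]].
- have : n + 1 = 0 by lia.
  by move=> ->; rewrite mulr0z.
- by rewrite hx ?mul0rz //; lia.
- by rewrite hx ?mul0rz //; lia.
Qed.
Lemma ipow_k c : ipow (Lk c).
Proof. by move=> n hn; rewrite /=; case: eqP hn => // ->. Qed.

Lemma ipow_ipole x : ipow x -> ipole x.
Proof. by move=> h n hn; apply: h; lia. Qed.
Lemma ipoleD x y : ipole x -> ipole y -> ipole (x + y).
Proof. by move=> hx hy n hn; rewrite lvDn hx ?hy ?addr0. Qed.
Lemma ipoleM x y : ipow x -> ipole y -> ipole (x * y).
Proof.
move=> hx hy; rewrite /ipole lvM; have := lmul_vb (lvP x) (lvP y) hx hy.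
by rewrite add0r.
Qed.
Lemma ipole_sum I (r : seq I) (P : pred I) (F : I -> Lr) :
  (forall i, P i -> ipole (F i)) -> ipole (\sum_(i <- r | P i) F i).
Proof. by move=> h; apply: big_ind; [exact: (ipow_ipole ipow0) | exact: ipoleD | exact: h]. Qed.

Lemma ipole_res0 x : ipole x -> res x = 0 -> ipow x.
Proof.
move=> hx hr n hn; case: (sign_cases n) => [[m e]|[e|e]]; first by lia.
- by rewrite e.
- by apply: hx.
Qed.

Lemma res_ipow x : ipow x -> res x = 0.
Proof. by move=> h; apply: h. Qed.
Lemma resD x y : res (x + y) = res x + res y. Proof. by []. Qed.
Lemma resB x y : res (x - y) = res x - res y. Proof. by []. Qed.
Lemma res_sum I (r : seq I) (P : pred I) (F : I -> Lr) :
  res (\sum_(i <- r | P i) F i) = \sum_(i <- r | P i) res (F i).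
Proof. exact: lv_sum. Qed.
Lemma resLd x : res (Ld x) = 0.
Proof. by rewrite /res lvLd /lder; have -> : (-1 + 1 : int) = 0 by []; rewrite mulr0z. Qed.
Lemma resM x y : ipow x -> ipole y -> res (x * y) = lv x 0 * res y.
Proof.
move=> hx hy; rewrite /res lvM (lmul_convE _ (lvP x) (lvP y) hx hy).
have e : (-1 : int) - 0 - (-1) = 0%:Z by [].
by rewrite (conv_pos _ _ e) big_ord1.
Qed.

Lemma Ld_ipow x : ipow (Ld x) -> ipow x.
Proof.
move=> h n hn.
have := h (n - 1); rewrite lvLd /lder subrK => /(_ ltac:(lia)).
case: n hn => [m|m] hn; first by lia.
rewrite NegzE mulrNz => /eqP; rewrite oppr_eq0 -pmulrn => /eqP.
by move/Kmulrn_inj.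
Qed.

End Diff2.

Section Diff3.
Variable K : fieldType.
Hypothesis hchar : forall n : nat, (n.+1)%:R != 0 :> K.
Local Notation Lr := (Laur K).
Local Notation PS := (PS K).

Lemma GL (u W : PS) : pc u 0 = 1 -> pc W 0 = 0 -> PE u = PE W * u -> PD u = PD W * u.
Proof.
move=> u0 W0 hE.
have [F eF] : {F | F = PD u - PD W * u} by exists (PD u - PD W * u).
have hF : PE F = PE W * F.
  rewrite eF PEB PEM !PE_PD hE PDM; ring.
have F0 : pc F 0 = 0.
  by rewrite eF pcB pcM0 /= u0 W0 Ld1 Ld0 mul0r subrr.
suff hall : forall k j, (j <= k)%N -> pc F j = 0.
  apply/eqP; rewrite -subr_eq0 -eF; apply/eqP; apply: ps_eq => i.
  exact: (hall i i (leqnn i)).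
elim => [|k IH] j hj; first by move: hj; rewrite leqn0 => /eqP ->.
move: hj; rewrite leq_eqVlt => /orP[/eqP ->|hj]; last exact: IH.
have e : pc F k.+1 *+ k.+1 = \sum_(i < k.+2) pc (PE W) i * pc F (k.+1 - i).
  by rewrite -pcM -hF.
move: e; rewrite big_ord_recl.
have -> : pc (PE W) ord0 = 0 by rewrite /= W0 mulr0n.
rewrite mul0r add0r big1 => [|i _]; last first.
  by rewrite /bump /= subSS IH ?mulr0 // leq_subr.
exact: (@Lmulrn_inj _ hchar _ k).
Qed.

Section Exp.
Variable W : PS.
Fixpoint useq (n : nat) : nat -> Lr :=
  match n with
  | 0 => fun k => (k == 0)%:R
  | n'.+1 => let prev := useq n' in
     fun k => if k == n'.+1 then
        Lsc (n'.+1%:R)^-1 (\sum_(j < n'.+1) pc (PE W) j.+1 * prev (n' - j)%N)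
      else prev k
  end.

Lemma useq_stable n k : (k <= n)%N -> useq n k = useq k k.
Proof.
elim: n => [|n IH] hk; first by move: hk; rewrite leqn0 => /eqP ->.
move: hk; rewrite leq_eqVlt => /orP[/eqP ->//|hk].
rewrite /= (ltn_eqF hk); exact: IH.
Qed.

Definition Pexp : PS := mkPS (fun k => useq k k).

Lemma Pexp0 : pc Pexp 0 = 1. Proof. by []. Qed.
Lemma PexpE : pc W 0 = 0 -> PE Pexp = PE W * Pexp.
Proof.
move=> W0; apply: ps_eq => -[|n]; first by rewrite /= mulr0n big_ord1 /= W0 mulr0n mul0r.
rewrite pcM big_ord_recl /= W0 mulr0n mul0r add0r eqxx Lsc_inv //.
apply: eq_bigr => j _; by rewrite subSS useq_stable // leq_subr.
Qed.
End Exp.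

Lemma exp_exists (W : PS) : pc W 0 = 0 ->
  exists u, pc u 0 = 1 /\ PD u = PD W * u /\ exists v, u * v = 1.
Proof.
move=> W0; exists (Pexp W); split => //; split.
  by apply: GL => //; apply: PexpE.
exists (Pexp (- W)).
have W0' : pc (- W) 0 = 0 by rewrite pcN W0 oppr0.
have h1 := PexpE W0; have h2 := PexpE W0'.
pose F := Pexp W * Pexp (- W).
have hF : PE F = 0.
  by rewrite /F PEM h1 h2 PEN; ring.
apply: ps_eq => -[|i].
  by rewrite pcM0 /= mulr1.
apply: (@Lmulrn_inj _ hchar _ i).
by have := congr1 (fun v => pc v i.+1) hF => /= ->.
Qed.

End Diff3.

Section Diff4.
Variable K : fieldType.
Hypothesis hchar : forall n : nat, (n.+1)%:R != 0 :> K.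
Local Notation Lr := (Laur K).
Local Notation PS := (PS K).

Lemma pc_one0 (v w : PS) : v * w = 1 -> pc v 0 * pc w 0 = 1.
Proof. by move=> e; rewrite -pcM0 e. Qed.

Lemma dlog_res (v w : PS) : v * w = 1 -> ipow (pc v 0) -> ipow (pc w 0) ->
  ipow (pc (PD v * w) 0) /\ forall k, res (pc (PD v * w) k) = 0.
Proof.
move=> hvw hv0 hw0.
have h00 := pc_one0 hvw.
set v0 := pc v 0 in hv0 h00 *; set w0 := pc w 0 in hw0 h00 *.
have hc : c0 v0 * c0 w0 = 1 by rewrite c0M h00 c01.
pose y := v * c0 w0; pose yt := w * c0 v0.
have hy : y * yt = 1.
  by rewrite /y /yt mulrACA hvw mul1r mulrC hc.
have y0 : pc y 0 = 1 by rewrite /y pcM0; exact: h00.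
pose L := mkPS (fun k => match k with 0 => 0 | k'.+1 => Lsc (k'.+1%:R)^-1 (pc (PE y * yt) k'.+1) end).
have hL : PE L = PE y * yt.
  apply: ps_eq => -[|k]; first by rewrite pcM0 /= !mulr0n mul0r.
  by rewrite /= Lsc_inv.
have hE : PE y = PE L * y.
  by rewrite hL -mulrA (mulrC yt) hy mulr1.
have hD : PD y = PD L * y by apply: GL.
have ev : v = y * c0 v0 by rewrite /y -mulrA (mulrC (c0 w0)) hc mulr1.
have ew : w = yt * c0 w0 by rewrite /yt -mulrA hc mulr1.
have key : PD v * w = PD L + c0 (Ld v0 * w0).
  rewrite {1}ev ew PDM hD PDc0 -c0M.
  transitivity (PD L * (y * yt) * (c0 v0 * c0 w0) + (y * yt) * (c0 (Ld v0) * c0 w0)); first by ring.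
  by rewrite hy hc !mulr1 !mul1r.
rewrite key; split.
  rewrite pcD /=; apply: ipowD; first by rewrite Ld0; exact: ipow0.
  by apply: ipowM => //; apply: ipowLd.
move=> k; rewrite pcD resD; have -> : res (pc (PD L) k) = 0 by apply: resLd. rewrite add0r /=.
case: (k == 0%N); last by [].
by apply: res_ipow; apply: ipowM => //; apply: ipowLd.
Qed.

Lemma gauge_int (u w c : PS) : u * w = 1 -> ipow (pc u 0) -> ipow (pc w 0) ->
  (forall i, ipow (pc c i)) -> PD u = u * c -> forall k, ipow (pc u k).
Proof.
move=> huw hu0 hw0 hc hD.
have h00 := pc_one0 huw.
have hd0 : Ld (pc u 0) = pc u 0 * pc c 0.
  by have := congr1 (fun v => pc v 0) hD; rewrite pcM0.
have hdw : Ld (pc w 0) = - (pc c 0 * pc w 0).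
  have e : Ld (pc u 0 * pc w 0) = 0 by rewrite h00 Ld1.
  rewrite LdM hd0 in e.
  transitivity (Ld (pc w 0) * (pc u 0 * pc w 0)); first by rewrite h00 mulr1.
  transitivity ((pc u 0 * pc c 0 * pc w 0 + pc u 0 * Ld (pc w 0)) * pc w 0 - pc c 0 * pc w 0 * (pc u 0 * pc w 0)).
    by ring.
  by rewrite e h00 mul0r sub0r mulr1.
suff hall : forall k j, (j <= k)%N -> ipow (pc u j).
  by move=> k; apply: (hall k k).
elim => [|k IH] j hj; first by move: hj; rewrite leqn0 => /eqP ->.
move: hj; rewrite leq_eqVlt => /orP[/eqP ->|hj]; last exact: IH.
have e : Ld (pc u k.+1) = \sum_(j < k.+2) pc u j * pc c (k.+1 - j).
  by have := congr1 (fun v => pc v k.+1) hD; rewrite pcM.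
rewrite big_ord_recr /= subnn in e.
set r := \sum_(i < k.+1) _ in e.
have hr : ipow r.
  apply: ipow_sum => i _; apply: ipowM => //; apply: IH; rewrite -ltnS //.
have h1 : ipow (pc u k.+1 * pc w 0).
  apply: Ld_ipow; first exact: hchar.
  rewrite LdM e hdw.
  have -> : (r + pc u k.+1 * pc c 0) * pc w 0 + pc u k.+1 * - (pc c 0 * pc w 0) = r * pc w 0
    by ring.
  exact: ipowM.
have -> : pc u k.+1 = pc u k.+1 * pc w 0 * pc u 0 by rewrite -mulrA (mulrC (pc w 0)) h00 mulr1.
exact: ipowM.
Qed.

End Diff4.

Arguments lam {K}.
Section Glue.
Variable K : fieldType.
Local Notation Lr := (Laur K).
Local Notation PS := (PS K).

Definition toPS (a : LL K) : PS := mkPS (fun i =>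
  match pselect (laurent (a i)) with left H => (exist _ (a i) H : Lr) | right _ => 0 end).
Lemma toPSK (a : LL K) : Lvalid a -> ofPS (toPS a) = a.
Proof.
move=> h; apply/funext => i; rewrite /ofPS /toPS /=.
by case: pselect => // /(_ (h i)).
Qed.
Lemma ofPSK u : toPS (ofPS u) = u.
Proof. by apply: ofPS_inj; rewrite toPSK //; apply: ofPS_valid. Qed.

Lemma lpow_laurent (f : lser K) : lpow f -> laurent f.
Proof. by move=> h; exists 0. Qed.
Lemma lpole1_laurent (f : lser K) : lpole1 f -> laurent f.
Proof. by move=> h; exists (-1). Qed.
Lemma Lint_valid (a : LL K) : Lint a -> Lvalid a.
Proof. by move=> h i; apply: lpow_laurent. Qed.
Lemma Lpole1_valid (a : LL K) : Lpole1 a -> Lvalid a.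
Proof. by move=> h i; apply: lpole1_laurent. Qed.

Definition pint (u : PS) := forall i, ipow (pc u i).
Lemma Lint_pint u : Lint (ofPS u) <-> pint u. Proof. by []. Qed.

Lemma pintM u v : pint u -> pint v -> pint (u * v).
Proof. by move=> hu hv i; rewrite pcM; apply: ipow_sum => j _; apply: ipowM. Qed.
Lemma pintD u v : pint u -> pint v -> pint (u + v).
Proof. by move=> hu hv i; rewrite pcD; apply: ipowD. Qed.
Lemma pint1 : pint 1.
Proof. move=> i; rewrite pc1; apply: ipowMn; exact: ipow1. Qed.
Lemma pintPD u : pint u -> pint (PD u).
Proof. by move=> hu i; apply: ipowLd. Qed.

Lemma lam_mul (c : PS) i : pc (lam * c) i = match i with 0 => 0 | i'.+1 => pc c i' end.
Proof.
rewrite pcM; case: i => [|i]; first by rewrite big_ord1 /= mul0r.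
rewrite big_ord_recl /= mul0r add0r big_ord_recl /= mul1r subn1 /=.
by rewrite big1 ?addr0 // => j _; rewrite /= mul0r.
Qed.
Lemma pintlam u : pint u -> pint (lam * u).
Proof. by move=> hu [|i]; rewrite lam_mul //; exact: ipow0. Qed.
Lemma lam_inj (x y : PS) : lam * x = lam * y -> x = y.
Proof. by move=> e; apply: ps_eq => i; have := congr1 (fun v => pc v i.+1) e; rewrite !lam_mul. Qed.

Lemma Llin_PS (G : LL K -> LL K) : Llin G ->
  forall u, G (ofPS u) = ofPS (u * toPS (G (ofPS (1 : PS)))).
Proof.
move=> [hv hl] u.
have v1 := ofPS_valid (1 : PS).
rewrite -ofPS_mul toPSK; last exact: hv.
have := (hl (ofPS u) (ofPS (1 : PS)) (ofPS_valid u) v1).2.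
by rewrite ofPS_mul mulr1.
Qed.

Lemma Liso_PS (G : LL K -> LL K) : Liso G ->
  exists et, toPS (G (ofPS (1 : PS))) * et = 1.
Proof.
move=> [hG [H [hH hinv]]].
exists (toPS (H (ofPS (1 : PS)))).
have e1 := (hinv (ofPS (1 : PS)) (ofPS_valid (1 : PS))).1.
rewrite Llin_PS // Llin_PS // in e1.
rewrite Llin_PS // in e1; rewrite ofPSK in e1.
apply: (@ofPS_inj K); by rewrite !mul1r in e1.
Qed.

Lemma Lmul_valid (a b : LL K) : Lvalid a -> Lvalid b -> Lvalid (Lmul a b).
Proof.
move=> ha hb; have [u ->] := valid_ofPS ha; have [v ->] := valid_ofPS hb.
by rewrite ofPS_mul; apply: ofPS_valid.
Qed.

Lemma lconn_u_PS (D : LL K -> LL K) : lconn_u D ->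
  forall u, D (ofPS u) = ofPS (lam * PD u + u * toPS (D (ofPS (1 : PS)))).
Proof.
move=> [hv [ha hl]] u.
have := hl (ofPS u) (ofPS (1 : PS)) (ofPS_valid u) (ofPS_valid (1 : PS)).
rewrite ofPS_mul mulr1 => ->.
have eb : D (ofPS (1 : PS)) = ofPS (toPS (D (ofPS (1 : PS)))) by rewrite toPSK //; exact: hv (ofPS_valid (1 : PS)).
rewrite {1}eb ofPS_der ofPS_lam !ofPS_mul ofPS_add; congr ofPS; ring.
Qed.

Lemma pint1' : Lint (ofPS (1 : PS)).
Proof. exact: pint1. Qed.

Lemma lconn_int_PS (D : LL K -> LL K) : lconn_int D ->
  forall u, pint u -> D (ofPS u) = ofPS (lam * PD u + u * toPS (D (ofPS (1 : PS)))).
Proof.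
move=> [hv [ha hl]] u hu.
have := hl (ofPS u) (ofPS (1 : PS)) hu pint1'.
rewrite ofPS_mul mulr1 => ->.
have eb : D (ofPS (1 : PS)) = ofPS (toPS (D (ofPS (1 : PS)))) by rewrite toPSK //; exact: Lpole1_valid (hv _ pint1').
rewrite {1}eb ofPS_der ofPS_lam !ofPS_mul ofPS_add; congr ofPS; ring.
Qed.

Definition conn_of (b : PS) : LL K -> LL K :=
  fun s => Ladd (Lmul Llam (Lder s)) (Lmul s (ofPS b)).
Lemma conn_ofE b u : conn_of b (ofPS u) = ofPS (lam * PD u + u * b).
Proof. by rewrite /conn_of ofPS_der ofPS_lam !ofPS_mul ofPS_add. Qed.

Lemma conn_of_u b : lconn_u (conn_of b).
Proof.
split; [|split].
- by move=> x hx; have [u ->] := valid_ofPS hx; rewrite conn_ofE; apply: ofPS_valid.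
- move=> c x y hx hy; have [u ->] := valid_ofPS hx; have [v ->] := valid_ofPS hy.
  rewrite ofPS_add ofPS_cst !ofPS_mul !conn_ofE ofPS_add ofPS_mul; split; congr ofPS.
  + by rewrite PDD; ring.
  + by rewrite PDM PDcst; ring.
- move=> f s hf hs; have [u ->] := valid_ofPS hf; have [v ->] := valid_ofPS hs.
  rewrite ofPS_mul !conn_ofE ofPS_der ofPS_lam !ofPS_mul ofPS_add; congr ofPS.
  by rewrite PDM; ring.
Qed.

End Glue.

Section Main.
Variable K : fieldType.
Hypothesis hchar : forall n : nat, (n.+1)%:R != 0 :> K.
Local Notation Lr := (Laur K).
Local Notation PS := (PS K).
Local Notation one := (ofPS (1 : PS)).

Lemma ofPS1_0 j : one j 0 = (j == 0%N)%:R.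
Proof. by rewrite /ofPS /= lvMn /= /lone eqxx. Qed.

Lemma latE (f : LL K -> LL K) (hf : Llin f) h :
  (exists h0, lpow h0 /\ f (Lc0 h0) 0%N = h) <->
  (exists x0, ipow x0 /\ lv (x0 * pc (toPS (f one)) 0) = h).
Proof.
have hfE := Llin_PS hf.
split.
- move=> [h0 [hp <-]]; exists (exist _ h0 (lpow_laurent hp)); split => //.
  have -> : Lc0 h0 = ofPS (c0 (exist _ h0 (lpow_laurent hp) : Lr)) by rewrite -ofPS_c0.
  by rewrite (hfE (c0 _)) /ofPS pcM0.
- move=> [x0 [hp <-]]; exists (lv x0); split => //.
  by rewrite ofPS_c0 (hfE (c0 _)) /ofPS pcM0.
Qed.

Lemma lat_unit (e1 e2 et2 : PS) : e2 * et2 = 1 ->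
  (forall h, (exists x0, ipow x0 /\ lv (x0 * pc e1 0) = h) <->
             (exists x0, ipow x0 /\ lv (x0 * pc e2 0) = h)) ->
  ipow (pc (e1 * et2) 0).
Proof.
move=> h2 hl.
have [x0 [hx0 ex]] : exists x0, ipow x0 /\ lv (x0 * pc e2 0) = lv (pc e1 0).
  by apply/hl; exists 1; split; [exact: ipow1 | rewrite mul1r].
rewrite pcM0; have -> : pc e1 0 = x0 * pc e2 0 by apply: lv_inj.
by rewrite -mulrA -pcM0 h2 /= mulr1.
Qed.

Variables (m : lser K) (hm : lpow m) (D : LL K -> LL K) (l0 : lser K -> Prop).
Hypothesis hCC : CC_obj m D l0.
Variables (iota : LL K -> LL K) (hiota : Liso iota) (a : LL K) (ha : Lvalid a).
Hypothesis hiota0 : forall h, l0 h <-> exists h0, lpow h0 /\ iota (Lc0 h0) 0%N = h.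
Hypothesis hadef : forall x, Lvalid x ->
     D (iota x) = iota (Ladd (Lmul Llam (Lder x)) (Lmul a x)).

Definition mL : Lr := exist _ m (lpow_laurent hm).
Let e := toPS (iota one).
Let A := toPS a.
Lemma eA : a = ofPS A. Proof. by rewrite toPSK. Qed.
Lemma iotaE u : iota (ofPS u) = ofPS (u * e).
Proof. exact: (Llin_PS (proj1 hiota) u). Qed.

Lemma hadefPS u : D (ofPS (u * e)) = ofPS ((lam * PD u + u * A) * e).
Proof.
rewrite -iotaE hadef ?eA; last exact: ofPS_valid.
by rewrite ofPS_der ofPS_lam !ofPS_mul ofPS_add iotaE (mulrC A).
Qed.

Lemma latI h : l0 h <-> exists x0, ipow x0 /\ lv (x0 * pc e 0) = h.
Proof. by rewrite hiota0 latE //; exact: hiota.1. Qed.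

Lemma A0 : pc A 0 = mL.
Proof.
have [et het] := Liso_PS hiota.
have := hCC.2.1 (ofPS e) (ofPS_valid e).
rewrite -[e]mul1r hadefPS /ofPS pcM0 pcM0 pcD lam_mul add0r mul1r.
have -> : pc (1 : PS) 0 = 1 by []. rewrite mul1r -(lvM mL) => /lv_inj h.
have h0 := pc_one0 het.
by rewrite -[pc A 0]mulr1 -h0 mulrA h -mulrA h0 mulr1.
Qed.


Section Fiber.
Variable o : fiber_obj m D l0.
Definition eo := toPS (fo_iso o one).
Definition bo := toPS (fo_conn o one).

Lemma eoE u : fo_iso o (ofPS u) = ofPS (u * eo).
Proof. exact: (Llin_PS (proj1 (proj1 (fo_iso_ok o))) u). Qed.

Lemma eo_inv : exists eto, eo * eto = 1.
Proof. exact: Liso_PS (proj1 (fo_iso_ok o)). Qed.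

Lemma bo_valid : fo_conn o one = ofPS bo.
Proof. by rewrite toPSK //; apply: Lpole1_valid; apply: (fo_conn_ok o).1.1; exact: (@pint1' K). Qed.

Lemma boE u : pint u -> fo_conn o (ofPS u) = ofPS (lam * PD u + u * bo).
Proof. exact: (lconn_int_PS (fo_conn_ok o).1). Qed.

Lemma bo_pole i : ipole (pc bo i).
Proof.
have := (fo_conn_ok o).1.1 _ (@pint1' K); rewrite bo_valid; exact.
Qed.

Lemma bo_res i : res (pc bo i) = if i == 1%N then - (2%:R)^-1 else 0.
Proof.
have := (fo_conn_ok o).2.1 _ (@pint1' K) i; rewrite bo_valid => h.
rewrite /res; move: h; rewrite /ofPS => ->.
case: i => [|[|i]] //=.
- by rewrite /lone eqxx mulr1.
- by rewrite -[X in _ * X = _]/(0 : K) mulr0.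
Qed.

Lemma bo0 : pc bo 0 = mL.
Proof.
have := (fo_conn_ok o).2.2 _ (@pint1' K); rewrite bo_valid /ofPS => h.
change (lv (pc bo 0) = lmul m (lone K)) in h.
apply: lv_inj; rewrite h /= lmulC; first by rewrite lmul1 //; exact: lpow_laurent.
- exact: lpow_laurent.
- exact: laurent_lone.
Qed.

Lemma bo_rel et : e * et = 1 ->
  lam * PD (eo * et) + (eo * et) * A = bo * (eo * et).
Proof.
move=> het.
have := (proj1 (proj2 (fo_iso_ok o))) one (ofPS_valid 1).
rewrite (proj2 (fo_bc o)) ?bo_valid; last exact: (@pint1' K).
rewrite !eoE.
have -> : 1 * eo = (eo * et) * e by rewrite -mulrA (mulrC et) het mulr1 mul1r.
rewrite hadefPS => /ofPS_inj h.
have := congr1 (fun x => x * et) h.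
by rewrite -!mulrA het mulr1 (mulrC eo) => <-.
Qed.

Lemma latO h : l0 h <-> exists x0, ipow x0 /\ lv (x0 * pc eo 0) = h.
Proof.
rewrite (proj2 (proj2 (fo_iso_ok o))) latE //.
exact: (proj1 (proj1 (fo_iso_ok o))).
Qed.

End Fiber.


Lemma ipoleN (x : Lr) : ipole x -> ipole (- x).
Proof. by move=> h n hn; rewrite lvN h ?oppr0. Qed.

Lemma latOO (o1 o2 : fiber_obj m D l0) h :
  (exists x0, ipow x0 /\ lv (x0 * pc (eo o1) 0) = h) <->
  (exists x0, ipow x0 /\ lv (x0 * pc (eo o2) 0) = h).
Proof. by rewrite -latO -latO. Qed.

Lemma gaugeU (o1 o2 : fiber_obj m D l0) et2 : eo o2 * et2 = 1 ->
  pint (eo o1 * et2) /\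
  lam * PD (eo o1 * et2) + (eo o1 * et2) * bo o2 = bo o1 * (eo o1 * et2).
Proof.
move=> h2.
have [et het] := Liso_PS hiota.
have [et1 h1] := eo_inv o1.
set U := eo o1 * et2.
have r1 := bo_rel o1 het; have r2 := bo_rel o2 het.
set v1 := eo o1 * et in r1; set v2 := eo o2 * et in r2.
have ev1 : v1 = U * v2 by rewrite /v1 /U /v2 mulrA -(mulrA (eo o1)) (mulrC et2) h2 mulr1.
have hv2 : v2 * (e * et2) = 1.
  by rewrite /v2 -mulrA (mulrA et) (mulrC et) het mul1r.
have rel : lam * PD U + U * bo o2 = bo o1 * U.
  transitivity ((lam * PD U + U * bo o2) * (v2 * (e * et2))); first by rewrite hv2 mulr1.
  transitivity ((lam * PD (U * v2) + (U * v2) * A - U * (lam * PD v2 + v2 * A - bo o2 * v2)) * (e * et2)).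
    by rewrite PDM; ring.
  rewrite r2 -ev1 r1 subrr mulr0 subr0 ev1.
  transitivity (bo o1 * U * (v2 * (e * et2))); [ring | by rewrite hv2 mulr1].
split => //.
pose dl := bo o1 - bo o2.
have dl0 : pc dl 0 = 0 by rewrite /dl pcB !bo0 subrr.
have dli : forall i, ipow (pc dl i).
  move=> i; apply: ipole_res0.
    by rewrite /dl pcB; apply: ipoleD; [exact: bo_pole | apply: ipoleN; exact: bo_pole].
  by rewrite /dl pcB resB !bo_res subrr.
pose c := mkPS (fun i => pc dl i.+1).
have edl : dl = lam * c by apply: ps_eq => -[|i]; rewrite lam_mul.
have hD : PD U = U * c.
  apply: lam_inj; rewrite (mulrC U) mulrA -edl.
  have -> : lam * PD U = bo o1 * U - U * bo o2 by rewrite -rel addrK.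
  by rewrite /dl; ring.
apply: (gauge_int hchar (w := eo o2 * et1)) hD.
- by rewrite /U mulrA -(mulrA (eo o1)) (mulrC et2) h2 mulr1 h1.
- by apply: (lat_unit h2) => h; exact: latOO.
- by apply: (lat_unit h1) => h; exact: latOO.
- by move=> i; exact: dli.
Qed.


Lemma part1 (o1 o2 : fiber_obj m D l0) :
  exists g, fiber_hom o1 o2 g /\
    forall g', fiber_hom o1 o2 g' -> forall s, Lint s -> g' s = g s.
Proof.
have [et1 h1] := eo_inv o1; have [et2 h2] := eo_inv o2.
have [pU rel] := gaugeU o1 h2.
have pUt := (gaugeU o2 h1).1.
set U := eo o1 * et2 in pU rel; set Ut := eo o2 * et1 in pUt.
have hUU : U * Ut = 1.
  by rewrite /U /Ut mulrA -(mulrA (eo o1)) (mulrC et2) h2 mulr1 h1.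
have hUe : U * eo o2 = eo o1 by rewrite /U -mulrA (mulrC et2) h2 mulr1.
clearbody U Ut.
pose g := fun s => Lmul s (ofPS U).
have gE : forall u, g (ofPS u) = ofPS (u * U) by move=> u; rewrite /g ofPS_mul.
have isoE : forall x, Lvalid x -> fo_iso o2 (g x) = fo_iso o1 x.
  by move=> x hx; have [u ->] := valid_ofPS hx; rewrite gE !eoE -mulrA hUe.
exists g; split.
- split; [|split; [|split; [|split]]].
  + by move=> s hs; have [u eu] := valid_ofPS (Lint_valid hs); rewrite eu gE; apply: pintM => //; rewrite -Lint_pint -eu.
  + move=> s' hs'; have [u eu] := valid_ofPS (Lint_valid hs'); exists (ofPS (u * Ut)); split.
      by apply: pintM => //; rewrite -Lint_pint -eu.
    by rewrite gE eu -mulrA (mulrC Ut) hUU mulr1.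
  + move=> s1 s2 hs1 hs2; have [u1 ->] := valid_ofPS (Lint_valid hs1);
      have [u2 ->] := valid_ofPS (Lint_valid hs2); rewrite !gE => /ofPS_inj e12.
    suff -> : u1 = u2 by []. have := congr1 (fun x => x * Ut) e12; by rewrite /= -!mulrA hUU !mulr1.
  + move=> f s1 s2 hf hs1 hs2; have [uf ->] := valid_ofPS (Lint_valid hf);
      have [u1 ->] := valid_ofPS (Lint_valid hs1); have [u2 ->] := valid_ofPS (Lint_valid hs2).
    by rewrite ofPS_add ofPS_mul !gE ofPS_add ofPS_mul; split; congr ofPS; ring.
  + exists g; split; [split|split; [by []|split]].
    * by move=> x hx; have [u ->] := valid_ofPS hx; rewrite gE; apply: ofPS_valid.
    * move=> x y hx hy; have [u ->] := valid_ofPS hx; have [v ->] := valid_ofPS hy.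
      by rewrite ofPS_add ofPS_mul !gE ofPS_add ofPS_mul; split; congr ofPS; ring.
    * move=> s hs; have [u eu] := valid_ofPS (Lint_valid hs).
      have pu : pint u by rewrite -Lint_pint -eu.
      rewrite eu (boE o1 pu) !gE (boE o2); last exact: pintM.
      congr ofPS; rewrite PDM.
      transitivity (lam * PD u * U + u * (bo o1 * U)); first by ring.
      by rewrite -rel; ring.
    * exact: isoE.
- move=> g' [_ [_ [_ [_ [G [hG [hGg [_ hGiso]]]]]]]] s hs.
  have hsv := Lint_valid hs.
  have [u eu] := valid_ofPS hsv.
  rewrite -hGg //.
  have [w ew] := valid_ofPS (hG.1 _ hsv).
  have := hGiso s hsv; rewrite -(isoE s hsv) ew eu gE !eoE => /ofPS_inj hw.
  have -> : w = u * U.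
    by rewrite -[w]mulr1 -h2 mulrA hw -mulrA h2 mulr1.
  by [].
Qed.


Lemma part2a (o : fiber_obj m D l0) :
  lpole1 (a 1%N) /\ forall i : nat, a i (-1) = if i == 1%N then - (2%:R)^-1 else 0.
Proof.
have [et het] := Liso_PS hiota.
have [eto ho] := eo_inv o.
have r := bo_rel o het.
set v := eo o * et in r; set vt := e * eto.
have hvv : v * vt = 1.
  by rewrite /v /vt mulrA -(mulrA (eo o)) (mulrC et) het mulr1 ho.
have hv0 : ipow (pc v 0).
  apply: (lat_unit het) => h; rewrite -latO; exact: latI h.
have hvt0 : ipow (pc vt 0).
  apply: (lat_unit ho) => h; rewrite -latO; exact: iff_sym (latI h).
have [hX0 hXr] := dlog_res hchar hvv hv0 hvt0.
clearbody v vt.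
have eA' : A = bo o - lam * (PD v * vt).
  transitivity ((lam * PD v + v * A) * vt - lam * (PD v * vt)); first by rewrite mulrDl -mulrA (mulrC v) mulrA -(mulrA A) hvv mulr1; ring.
  by rewrite r -mulrA hvv mulr1.
have aE : forall i, a i = lv (pc A i) by move=> i; rewrite eA.
split.
- rewrite aE eA' pcB lam_mul; apply: ipoleD; first exact: bo_pole.
  by apply: ipoleN; apply: ipow_ipole.
- move=> i; rewrite aE eA' pcB lam_mul -/(res _) resB bo_res.
  case: i => [|i]; first by rewrite /res lv0 subr0.
  by rewrite hXr subr0.
Qed.


Lemma intr_neq0 (z : int) : z < 0 -> z%:~R != 0 :> K.
Proof. by case: z => // k _; rewrite NegzE mulrNz oppr_eq0 -pmulrn. Qed.

Definition primf (x : Lr) : lser K := fun n => if n < 0 then lv x (n - 1) / n%:~R else 0.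
Lemma laurent_prim x : laurent (primf x).
Proof.
case: (lvP x) => B hA; exists (B + 1) => n hn; rewrite /primf.
by case: ifP => // _; rewrite hA ?mul0r //; lia.
Qed.
Definition prim (x : Lr) : Lr := exist _ _ (laurent_prim x).

Lemma prim_spec x : res x = 0 -> ipow (x - Ld (prim x)).
Proof.
move=> hr n hn; rewrite lvB lvLd /lder /= /primf.
case: (sign_cases (n + 1)) => [[k e1]|[e1|e1]].
- have -> : n = -1 by lia.
  by rewrite /= mulr0z subr0.
- have hneg : n + 1 < 0 by lia.
  rewrite hneg; have -> : n + 1 - 1 = n by lia.
  rewrite -mulrzr -mulrA mulVf ?mulr1 ?subrr //; exact: intr_neq0.
- have hneg : n + 1 < 0 by lia.
  rewrite hneg; have -> : n + 1 - 1 = n by lia.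
  rewrite -mulrzr -mulrA mulVf ?mulr1 ?subrr //; exact: intr_neq0.
Qed.


Lemma part2b : lpole1 (a 1%N) ->
  (forall i : nat, a i (-1) = if i == 1%N then - (2%:R)^-1 else 0) ->
  inhabited (fiber_obj m D l0).
Proof.
move=> hp1 hres.
have aE : forall i, a i = lv (pc A i) by move=> i; rewrite eA.
pose W := mkPS (fun k => match k with 0 => 0 | k'.+1 => - prim (pc A k'.+2) end).
have [u [hu0 [huD [ut hut]]]] := exp_exists hchar (W := W) erefl.
have [et het] := Liso_PS hiota.
pose b := A + lam * PD W.
have b0 : pc b 0 = mL by rewrite /b pcD lam_mul addr0 A0.
have bpole : forall i, ipole (pc b i) /\
    res (pc b i) = if i == 1%N then - (2%:R)^-1 else 0.
  case => [|[|k]]; rewrite /b pcD lam_mul.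
  - rewrite addr0 A0; split; first exact: ipow_ipole.
    exact: res_ipow.
  - rewrite /= Ld0 addr0; split; first by move=> n; rewrite -aE; apply: hp1.
    by rewrite /res -aE /ladd /lder /= mul0rz addr0 hres.
  - have hr : res (pc A k.+2) = 0 by rewrite /res -aE hres.
    have hi := prim_spec hr.
    have -> : pc A k.+2 + pc (PD W) k.+1 = pc A k.+2 - Ld (prim (pc A k.+2)) by rewrite /= LdN.
    split; first exact: ipow_ipole.
    exact: res_ipow.
have hconn : Conn_obj m (conn_of b).
  split; [|split].
  - split; [|split].
    + move=> s hs; have [su esu] := valid_ofPS (Lint_valid hs).
      have psu : pint su by rewrite -Lint_pint -esu.
      rewrite esu conn_ofE => i; rewrite /ofPS pcD; apply: ipoleD.
        by apply: ipow_ipole; apply: pintlam; apply: pintPD.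
      rewrite pcM; apply: ipole_sum => j _; apply: ipoleM => //; exact: (bpole _).1.
    + move=> c x y hx hy; exact: (conn_of_u b).2.1 c x y (Lint_valid hx) (Lint_valid hy).
    + move=> f s hf hs; exact: (conn_of_u b).2.2 f s (Lint_valid hf) (Lint_valid hs).
  - move=> s hs i; have [su esu] := valid_ofPS (Lint_valid hs).
    have psu : pint su by rewrite -Lint_pint -esu.
    rewrite esu conn_ofE.
    change (res (pc (lam * PD su + su * b) i) =
      match i with 0 => 0 | j.+1 => - (2%:R)^-1 * lv (pc su j) 0 end).
    rewrite pcD resD.
    have -> : res (pc (lam * PD su) i) = 0.
      by rewrite lam_mul; case: i => [|i]; [by [] | exact: resLd].
    rewrite add0r (pcM su b) res_sum.
    under eq_bigr => j _ do rewrite (resM (psu j) (bpole _).1) (bpole _).2.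
    case: i => [|i]; first by rewrite big_ord1 /= mulr0.
    rewrite big_ord_recr /= subnn /= mulr0 addr0 big_ord_recr /= subSnn /= mulrC.
    rewrite big1 ?add0r // => j _.
    have -> : (i.+1 - j == 1)%N = false by apply/eqP; have := ltn_ord j; lia.
    by rewrite mulr0.
  - move=> s hs; have [su esu] := valid_ofPS (Lint_valid hs).
    rewrite esu conn_ofE /ofPS pcD lam_mul add0r pcM0 b0 lvM lmulC //; [exact: lvP | exact: (lpow_laurent hm)].
have hbc : base_change (conn_of b) (conn_of b).
  by split; [exact: conn_of_u|].
pose f := fun x => iota (Lmul x (ofPS u)).
have fE : forall xu, f (ofPS xu) = ofPS (xu * u * e) by move=> xu; rewrite /f ofPS_mul iotaE.
have flin : Llin f.
  split.
  - by move=> x hx; have [xu ->] := valid_ofPS hx; rewrite fE; apply: ofPS_valid.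
  - move=> x y hx hy; have [xu ->] := valid_ofPS hx; have [yu ->] := valid_ofPS hy.
    by rewrite ofPS_add ofPS_mul !fE ofPS_add ofPS_mul; split; congr ofPS; ring.
have hiso : CC_iso f (conn_of b) (@lpow K) D l0.
  split; [|split].
  - split => //; exists (fun y => Lmul y (ofPS (ut * et))); split.
    + split.
      * by move=> x hx; have [xu ->] := valid_ofPS hx; rewrite ofPS_mul; apply: ofPS_valid.
      * move=> x y hx hy; have [xu ->] := valid_ofPS hx; have [yu ->] := valid_ofPS hy.
        by rewrite ?ofPS_add ?ofPS_mul ?ofPS_add ?ofPS_mul ?ofPS_mul; split; congr ofPS; ring.
    + move=> x hx; have [xu ->] := valid_ofPS hx; rewrite fE !ofPS_mul fE; split; congr ofPS.
      * transitivity (xu * (u * ut) * (e * et)); first by ring.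
        by rewrite hut het !mulr1.
      * transitivity (xu * (u * ut) * (e * et)); first by ring.
        by rewrite hut het !mulr1.
  - move=> x hx; have [xu ->] := valid_ofPS hx.
    rewrite conn_ofE !fE hadefPS; congr ofPS; rewrite PDM huD /b; ring.
  - move=> h; rewrite latI (latE flin).
    have -> : toPS (f one) = u * e by rewrite fE ofPSK mul1r.
    by rewrite pcM0 hu0 mul1r.
exact: (inhabits (FiberObj hconn hbc hiso)).
Qed.


Theorem main_in :
  (forall o1 o2 : fiber_obj m D l0,
     exists g, fiber_hom o1 o2 g /\
       forall g', fiber_hom o1 o2 g' -> forall s, Lint s -> g' s = g s) /\
  (inhabited (fiber_obj m D l0) <->
     (lpole1 (a 1%N) /\
      forall i : nat, a i (-1) = if i == 1%N then - (2%:R)^-1 else 0)).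
Proof.
split; first exact: part1.
split; first by case=> o; exact: part2a.
by case=> h1 h2; exact: part2b.
Qed.

End Main.

Unset Implicit Arguments. Set Strict Implicit. Set Printing Implicit Defensive.

Theorem corollary4p9 (R : realType) (t d Z : pser R[i])
  (hdisc0 : disc t d 0%N = 0) (hdisc1 : disc t d 1%N != 0)
  (hZ0 : Z 0%N = 0) (hZ : forall n, ps_comp (disc t d) Z n = (n == 2%N)%:R)
  (D : LL R[i] -> LL R[i]) (l0 : lser R[i] -> Prop)
  (hCC : CC_obj (mu_coef t Z) D l0)
  (iota : LL R[i] -> LL R[i]) (hiota : Liso iota)
  (hiota0 : forall h, l0 h <-> exists h0, lpow h0 /\ iota (Lc0 h0) 0%N = h)
  (a : LL R[i]) (ha : Lvalid a)
  (hadef : forall x, Lvalid x ->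
     D (iota x) = iota (Ladd (Lmul Llam (Lder x)) (Lmul a x))) :
  (forall o1 o2 : fiber_obj (mu_coef t Z) D l0,
     exists g, fiber_hom o1 o2 g /\
       forall g', fiber_hom o1 o2 g' -> forall s, Lint s -> g' s = g s) /\
  (inhabited (fiber_obj (mu_coef t Z) D l0) <->
     (lpole1 (a 1%N) /\
      forall i : nat, a i (-1) = if i == 1%N then - (2%:R)^-1 else 0)).
Proof.
apply: (main_in _ _ hCC hiota ha hiota0 hadef).
- by move=> n; rewrite pnatr_eq0.
- by case=> // k _; rewrite /mu_coef /ps_lift.
Qed.
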